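(* There exists a list $I=(x_1,\ldots,x_n)$ of items with all sizes $x_i\in(1/3,1]$ such that $$\mathbb{E}[\mathrm{BF}(I^\sigma)] > \frac{6}{5}\,\mathrm{OPT}(I),$$ where $\sigma$ is drawn uniformly at random from the set $\mathcal{S}_n$ of permutations of $[n]$.
   Context: Bin packing: given a list $I=(x_1,\ldots,x_n)$ of items with sizes in $(0,1]$, a packing assigns items to unit-capacity bins so that the total size of items in each bin is at most $1$. $\mathrm{OPT}(I)$ denotes the minimum number of bins in a feasible packing. The online algorithm Best Fit (BF) processes the items in the given order and packs the current item into the fullest bin (largest current load) into which it fits, opening a new bin if it fits into no existing bin; items are never moved. $\mathrm{BF}(I)$ denotes the number of bins Best Fit uses on list $I$. For $\sigma\in\mathcal{S}_n$, $I^\sigma=(x_{\sigma(1)},\ldots,x_{\sigma(n)})$. *)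

(* Defs.v *)
From mathcomp Require Import all_boot all_order all_algebra all_fingroup.
From mathcomp Require Import reals.
Set Implicit Arguments. Unset Strict Implicit. Unset Printing Implicit Defensive.
Import Order.TTheory GRing.Theory Num.Theory.
Local Open Scope ring_scope.

Section BinPacking.
Variable R : realFieldType.

(* A Best Fit state is the sequence of current bin loads (one entry per open bin). *)

(* Index of the fullest bin (largest load) into which x fits, if any
   (ties broken by smallest index; tie-breaking does not affect the multiset of loads). *)
Definition bf_choice (loads : seq R) (x : R) : option nat :=
  foldl (fun b i =>
           if loads`_i + x <= 1 then
             match b with
             | None => Some i
             | Some j => if loads`_j < loads`_i then Some i else Some j
             end
           else b) None (iota 0 (size loads)).

Definition bf_step (loads : seq R) (x : R) : seq R :=
  match bf_choice loads x with
  | None => rcons loads x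
  | Some i => set_nth 0 loads i (loads`_i + x)
  end.

Definition BF (I : seq R) : nat := size (foldl bf_step [::] I).

Definition packable (I : seq R) (m : nat) : bool :=
  [exists f : {ffun 'I_(size I) -> 'I_m},
     [forall j : 'I_m, \sum_(i < size I | f i == j) I`_i <= 1]].

(* OPT(I): least m such that I is packable into m bins (searched in 0..size I;
   when all items have size <= 1, size I bins always suffice). *)
Definition OPT (I : seq R) : nat :=
  head (size I) [seq m <- iota 0 (size I).+1 | packable I m].

Definition permute (I : seq R) (s : {perm 'I_(size I)}) : seq R :=
  [seq I`_(s i) | i <- enum 'I_(size I)].

Definition expected_BF (I : seq R) : R :=
  (\sum_(s : {perm 'I_(size I)}) (BF (permute s))%:R) / #|{perm 'I_(size I)}|%:R.

End BinPacking.

(* Main.v *)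
Require Import Defs.
From mathcomp Require Import all_boot all_order all_algebra all_fingroup.
From mathcomp Require Import reals.
From mathcomp Require Import lra.
Import Order.TTheory GRing.Theory Num.Theory.
Local Open Scope ring_scope.

Definition bfn_choice (loads : seq nat) (x : nat) : option nat :=
  foldl (fun b i =>
           if (nth 0 loads i + x <= 16)%N then
             match b with
             | None => Some i
             | Some j => if (nth 0 loads j < nth 0 loads i)%N then Some i else Some j
             end
           else b) None (iota 0 (size loads)).
Definition bfn_step (loads : seq nat) (x : nat) : seq nat :=
  match bfn_choice loads x with
  | None => rcons loads x
  | Some i => set_nth 0 loads i (nth 0 loads i + x)
  end.
Definition bfn (I : seq nat) : nat := size (foldl bfn_step [::] I).
Definition l0 : seq nat := [:: 6; 7; 8; 8; 9; 10]%N.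

Lemma comp_sum : (\sum_(t <- permutations (iota 0 6)) bfn [seq nth 0 l0 k | k <- t] = 2600)%N.
Proof. rewrite unlock. vm_compute. reflexivity. Qed.

Lemma sum_perm_perms n (G : seq nat -> nat) :
  (\sum_(s : 'S_n) G [seq val (s i) | i <- enum 'I_n] =
   \sum_(t <- permutations (iota 0 n)) G t)%N.
Proof.
pose h (s : 'S_n) := [seq val (s i) | i <- enum 'I_n].
rewrite -(big_image _ _ h predT G).
apply: perm_big.
have hinj : injective h.
  move=> s t /= E; apply/permP => i.
  have E' : [seq s i | i <- enum 'I_n] = [seq t i | i <- enum 'I_n].
    by apply: (inj_map val_inj); rewrite -(map_comp val s) -(map_comp val t); exact: E.
  have H := (eq_in_map _ _ _).2 E' i; by apply: H; rewrite mem_enum.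
have Us1 : uniq (image h predT).
  by rewrite map_inj_uniq ?enum_uniq.
have sub : {subset image h predT <= permutations (iota 0 n)}.
  move=> t /mapP [s _ ->]; rewrite mem_permutations /h.
  rewrite -val_enum_ord map_comp; apply: perm_map.
  apply: uniq_perm; first by rewrite map_inj_uniq ?enum_uniq //; apply: perm_inj.
    exact: enum_uniq.
  move=> x; rewrite mem_enum; apply/mapP; exists (s^-1 x)%g; first by rewrite mem_enum.
  by rewrite permKV.
have sz : (size (permutations (iota 0 n)) <= size (image h predT))%N.
  by rewrite size_image size_permutations ?iota_uniq // size_iota card_Sn.
have [_ E] := uniq_min_size Us1 sub sz.
by apply: uniq_perm => //; apply: permutations_uniq.
Qed.

Lemma map_set_nth (A B : Type) (f : A -> B) x0 (s : seq A) n y :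
  map f (set_nth x0 s n y) = set_nth (f x0) (map f s) n (f y).
Proof.
elim: s n => [|a s IH] [|n] //=; last by rewrite IH.
by elim: n => //= n ->.
Qed.

Section Sim.
Variable R : realFieldType.
Definition cc (k : nat) : R := k%:R / 16%:R.

Lemma cc0 : cc 0 = 0. Proof. by rewrite /cc mul0r. Qed.
Lemma ccD a b : cc (a + b) = cc a + cc b. Proof. by rewrite /cc natrD mulrDl. Qed.
Lemma nth_cc (L : seq nat) k : (map cc L)`_k = cc (nth 0 L k).
Proof.
case: (ltnP k (size L)) => hk; first by rewrite (nth_map 0%N).
by rewrite !nth_default ?size_map // cc0.
Qed.
Lemma cc_le a b : (cc a + cc b <= 1) = (a + b <= 16)%N.
Proof.
rewrite -ccD /cc ler_pdivrMr ?ltr0n // mul1r ler_nat //.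
Qed.
Lemma cc_le1 a : (cc a <= 1) = (a <= 16)%N.
Proof. by have := cc_le a 0; rewrite cc0 addr0 addn0. Qed.
Lemma cc_lt a b : (cc a < cc b) = (a < b)%N.
Proof. by rewrite /cc ltr_pM2r ?invr_gt0 ?ltr0n // ltr_nat. Qed.

Lemma foldl_ext (A B : Type) (f g : B -> A -> B) :
  (forall b a, f b a = g b a) -> forall s b, foldl f b s = foldl g b s.
Proof. by move=> fg; elim=> //= a s IH b; rewrite fg IH. Qed.

Lemma choice_sim (L : seq nat) x : bf_choice (map cc L) (cc x) = bfn_choice L x.
Proof.
rewrite /bf_choice /bfn_choice size_map; apply: foldl_ext => b i.
rewrite !nth_cc cc_le; case: b => // j; by rewrite !nth_cc cc_lt.
Qed.

Lemma step_sim (L : seq nat) x : bf_step (map cc L) (cc x) = map cc (bfn_step L x).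
Proof.
rewrite /bf_step /bfn_step choice_sim; case: bfn_choice => [i|].
  by rewrite map_set_nth cc0 ccD nth_cc.
by rewrite map_rcons.
Qed.

Lemma fold_sim (t L : seq nat) :
  foldl (@bf_step R) (map cc L) (map cc t) = map cc (foldl bfn_step L t).
Proof. by elim: t L => //= a t IH L; rewrite step_sim IH. Qed.

Lemma BF_sim (t : seq nat) : BF (map cc t) = bfn t.
Proof. by have /= E := fold_sim t [::]; rewrite /BF E size_map. Qed.
End Sim.

Lemma sum_BF (R : realFieldType) (I : seq R) :
  \sum_(s : {perm 'I_(size I)}) ((BF (permute s))%:R : R) =
  (\sum_(t <- permutations (iota 0 (size I))) BF [seq nth 0%R I k | k <- t])%N%:R.
Proof.
rewrite -natr_sum; congr (_%:R); rewrite -sum_perm_perms.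
apply: eq_bigr => s _; congr BF; rewrite /permute -map_comp.
by apply: eq_map => i.
Qed.

Definition g0 (k : nat) : nat := match k with 0 | 5 => 0 | 1 | 4 => 1 | _ => 2 end%N.
Lemma g0lt k : (g0 k < 3)%N. Proof. by case: k => [|[|[|[|[|[|k]]]]]]. Qed.
Definition f0 : {ffun 'I_6 -> 'I_3} := [ffun i : 'I_6 => inord (g0 i)].

Lemma f0ok (j : 'I_3) : (\sum_(i < 6 | f0 i == j) nth 0 l0 i <= 16)%N.
Proof.
rewrite big_mkcond /=.
rewrite (eq_bigr (fun i : 'I_6 => if g0 i == val j then nth 0 l0 i else 0)%N); last first.
  by move=> i _; rewrite ffunE -val_eqE /= inordK ?g0lt.
rewrite -(big_mkord xpredT (fun i => if g0 i == val j then nth 0 l0 i else 0)%N).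
case: j => [[|[|[|//]]] Hj]; rewrite unlock; vm_compute; reflexivity.
Qed.

Section Main.
Variable R : realType.
Definition I0 : seq R := map (@cc R) l0.

Lemma packI0 : packable I0 3.
Proof.
apply/existsP; exists f0; apply/forallP => j.
have := f0ok j.
have -> : \sum_(i < size I0 | f0 i == j) I0`_i = cc R (\sum_(i < 6 | f0 i == j) nth 0 l0 i)%N.
  rewrite (big_morph (cc R) (@ccD R) (cc0 R)).
  by apply: eq_bigr => i _; rewrite nth_cc.
by rewrite cc_le1.
Qed.

Lemma OPT_I0 : (OPT I0 <= 3)%N.
Proof.
rewrite /OPT (_ : size I0 = 6%N) // /=.
case: (packable I0 0) => //=; case: (packable I0 1) => //=;
case: (packable I0 2) => //=; by rewrite packI0.
Qed.

End Main.

Lemma items_ok (R : realType) : all (fun x : R => (3%:R)^-1 < x <= 1) (I0 R).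
Proof.
have H : forall k, (6 <= k <= 16)%N -> (3%:R : R)^-1 < cc R k <= 1.
  move=> k /andP [h1 h2]; rewrite cc_le1 h2 andbT /cc.
  have : (6%:R : R) <= k%:R by rewrite ler_nat.
  move=> hk; lra.
by rewrite /= !H.
Qed.

Lemma EBF_I0 (R : realType) : expected_BF (I0 R) = 2600%:R / 720%:R.
Proof.
rewrite /expected_BF card_Sn sum_BF.
have -> : size (I0 R) = 6%N by [].
congr (_%:R / _); rewrite -[RHS]comp_sum.
apply: eq_bigr => t _.
rewrite -(BF_sim R) -map_comp; congr BF; apply: eq_map => k /=.
by rewrite nth_cc.
Qed.

Theorem proposition3 (R : realType) :
  exists I : seq R,
    all (fun x => (3%:R)^-1 < x <= 1) I /\
    expected_BF I > (6%:R / 5%:R) * (OPT I)%:R.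
Proof.
exists (I0 R); split; first exact: items_ok.
rewrite EBF_I0.
have : ((OPT (I0 R))%:R : R) <= 3%:R by rewrite ler_nat OPT_I0.
move=> h; lra.
Qed.
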